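(* For every $k \geq 4$, there exists an even polynomial $p \in \Delta_k$ such that $x_1^2x_2^2 \cdots x_k^2$ divides $p$ and $(1,0,\ldots,0)$ is a bad point for $p$.
   Context: $P_k$ is the set of homogeneous polynomials in $\mathbb{R}[x_1,\ldots,x_k]$ taking only non-negative values on $\mathbb{R}^k$; $\Sigma_k$ is the set of homogeneous polynomials in $k$ variables that are sums of squares of polynomials with real coefficients; $\Delta_k=P_k\setminus\Sigma_k$. A polynomial is even if every variable appears with even exponent in every monomial. A point $x_0\in\mathbb{R}^k$ is a bad point for $p\in P_k$ if $q(x_0)=0$ for every polynomial $q\in\mathbb{R}[x_1,\ldots,x_k]$ such that $q^2p\in\Sigma_k$. *)

(* Defs.v *)
From HB Require Import structures.
From mathcomp Require Import all_boot all_order all_algebra.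
From mathcomp Require Import Rstruct.
From mathcomp Require Import mpoly.
From Stdlib Require Import Reals.

Set Implicit Arguments.
Unset Strict Implicit.
Unset Printing Implicit Defensive.

Import Order.TTheory GRing.Theory Num.Theory.
Local Open Scope ring_scope.

Definition homogeneous (k : nat) (p : {mpoly R[k]}) : Prop :=
  exists d : nat, p \is d.-homog.

Definition in_P (k : nat) (p : {mpoly R[k]}) : Prop :=
  homogeneous p /\ forall x : 'I_k -> R, 0 <= p.@[x].

Definition in_Sigma (k : nat) (p : {mpoly R[k]}) : Prop :=
  homogeneous p /\
  exists qs : seq {mpoly R[k]}, p = \sum_(q <- qs) q ^+ 2.

Definition in_Delta (k : nat) (p : {mpoly R[k]}) : Prop :=
  in_P p /\ ~ in_Sigma p.

Definition even_mpoly (k : nat) (p : {mpoly R[k]}) : Prop :=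
  forall m, m \in msupp p -> forall i : 'I_k, ~~ odd (m i).

Definition mdivides (k : nat) (a p : {mpoly R[k]}) : Prop :=
  exists r : {mpoly R[k]}, p = a * r.

Definition sq_monomial (k : nat) : {mpoly R[k]} :=
  \prod_(i < k) ('X_i) ^+ 2.

Definition bad_point (k : nat) (p : {mpoly R[k]}) (x0 : 'I_k -> R) : Prop :=
  forall q : {mpoly R[k]}, in_Sigma (q ^+ 2 * p) -> q.@[x0] = 0.

Definition e1 (k : nat) : 'I_k -> R :=
  fun i => if val i == 0%N then 1 else 0.
Arguments sq_monomial k : clear implicits.
Arguments e1 k : clear implicits.

(* Main.v *)
Require Import Defs.
From HB Require Import structures.
From mathcomp Require Import all_boot all_order all_algebra.
From mathcomp Require Import Rstruct mpoly.
From Stdlib Require Import Reals Lia.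
From mathcomp Require Import ring lra zify.
Set Implicit Arguments.
Unset Strict Implicit.
Unset Printing Implicit Defensive.
Import Order.TTheory GRing.Theory Num.Theory.
Local Open Scope ring_scope.

Section PolyGadget.
Variable A : idomainType.
Hypothesis FR : forall s : seq A, \sum_(a <- s) a ^+ 2 = 0 -> forall a, a \in s -> a = 0.

Lemma sumsq_horner0 (Fs : seq {poly A}) :
  (\sum_(F <- Fs) F ^+ 2).[0] = \sum_(a <- map (fun F => F.[0]) Fs) a ^+ 2.
Proof.
rewrite horner_sum big_map; apply: eq_bigr => F _; by rewrite horner_exp.
Qed.

Lemma roots0 (N : nat) (Fs : seq {poly A}) Q : (0 < N)%nat ->
  \sum_(F <- Fs) F ^+ 2 = 'X^N * Q -> forall F, F \in Fs -> F.[0] = 0.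
Proof.
move=> N0 e F FF.
have : (\sum_(F <- Fs) F ^+ 2).[0] = 0.
  by rewrite e hornerM hornerXn expr0n; case: N N0 {e} => // N _; rewrite mul0r.
rewrite sumsq_horner0 => /FR; apply; exact: map_f.
Qed.

Lemma drop1K (F : {poly A}) : F.[0] = 0 -> F = drop_poly 1 F * 'X.
Proof.
move=> F0; rewrite -[LHS](poly_take_drop 1) expr1.
suff -> : take_poly 1 F = 0 by rewrite add0r.
apply/polyP => i; rewrite coef_take_poly coef0.
by case: i => [|i] //=; rewrite -horner_coef0.
Qed.

Lemma sumsq_drop (Fs : seq {poly A}) : (forall F, F \in Fs -> F.[0] = 0) ->
  \sum_(F <- Fs) F ^+ 2 = 'X^2 * \sum_(F <- map (drop_poly 1) Fs) F ^+ 2.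
Proof.
move=> H; rewrite big_map mulr_sumr big_seq [RHS]big_seq; apply: eq_bigr => F FF.
by rewrite {1}(drop1K (H F FF)) exprMn mulrC.
Qed.

Lemma X2_neq0 : ('X^2 : {poly A}) != 0.
Proof. by rewrite expf_neq0 // polyX_eq0. Qed.

Lemma L2 (m : nat) (Fs : seq {poly A}) Q :
  \sum_(F <- Fs) F ^+ 2 = 'X^(2 * m) * Q -> forall F, F \in Fs -> exists F', F = 'X^m * F'.
Proof.
elim: m Fs Q => [|m IH] Fs Q e F FF; first by exists F; rewrite expr0 mul1r.
have r0 := roots0 (isT : (0 < 2 * m.+1)%nat) e.
move: e; rewrite sumsq_drop // mulnS exprD -mulrA => /(mulfI X2_neq0) e.
have [F' eF'] := IH _ _ e (drop_poly 1 F) (map_f _ FF).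
exists F'; by rewrite (drop1K (r0 F FF)) eF' exprS mulrC mulrA.
Qed.

Lemma L1 (N : nat) (Fs : seq {poly A}) Q :
  \sum_(F <- Fs) F ^+ 2 = 'X^N * Q -> exists gs : seq A, Q.[0] = \sum_(g <- gs) g ^+ 2.
Proof.
elim/ltn_ind: N Fs Q => N IH Fs Q e.
case: N IH e => [|[|N]] IH e.
- exists (map (fun F => F.[0]) Fs); by rewrite -sumsq_horner0 e expr0 mul1r.
- have r0 := roots0 (isT : (0 < 1)%nat) e.
  move: e; rewrite sumsq_drop // expr2 -mulrA expr1 => /(mulfI (negbT (polyX_eq0 _))) e.
  exists [::]; by rewrite big_nil -e hornerM hornerX mul0r.
- have r0 := roots0 (isT : (0 < N.+2)%nat) e.
  have eX : 'X^(N.+2) * Q = 'X^2 * ('X^N * Q) by rewrite mulrA -exprD add2n.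
  move: e; rewrite eX; rewrite sumsq_drop // => /(mulfI X2_neq0) e.
  by apply: (IH N _ _ _ e).
Qed.
End PolyGadget.

Section FRmpoly.
Variable (n : nat) (K : realDomainType).
Implicit Types p q : {mpoly K[n]}.

Definition PL p := 0 <= mleadc p.

Lemma PL_pos p : PL p -> p != 0 -> 0 < mleadc p.
Proof. by move=> h nz; rewrite lt_def [0 <= _]h andbT mleadc_eq0. Qed.

Lemma PL_coef p m : PL p -> (mlead p <= m)%O -> 0 <= p@_m.
Proof.
move=> h; rewrite le_eqVlt => /orP[/eqP <- //|lt].
by rewrite mcoeff_gt_mlead.
Qed.

Lemma PL_add p q : PL p -> PL q -> PL (p + q) /\ (p + q = 0 -> p = 0 /\ q = 0).
Proof.
move=> hp hq.
have [->|nzp] := eqVneq p 0; first by rewrite add0r.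
have [->|nzq] := eqVneq q 0; first by rewrite addr0.
pose m := (mlead p `|` mlead q)%O.
have lep : (mlead p <= m)%O by rewrite leUl.
have leq' : (mlead q <= m)%O by rewrite leUr.
have cpos : 0 < (p + q)@_m.
  rewrite mcoeffD.
  have [e|e] : m = mlead p \/ m = mlead q.
    by rewrite /m; case: (leP (mlead p) (mlead q)) => h; [right|left].
  - by rewrite e ltr_wpDr ?PL_pos // PL_coef // -e.
  - by rewrite e ltr_wpDl ?PL_pos // PL_coef // -e.
have ml : mlead (p + q) = m.
  apply/le_anti; rewrite mleadD_le /=.
  apply: msupp_le_mlead; by rewrite mcoeff_msupp gt_eqF.
split; first by rewrite /PL ml ltW.
by move=> e; move: cpos; rewrite e mcoeff0 ltxx.
Qed.

Lemma PL_sq p : PL (p ^+ 2).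
Proof.
have [->|nzp] := eqVneq p 0; first by rewrite expr0n /PL mlead0 mcoeff0.
by rewrite /PL mleadX // mleadcX sqr_ge0.
Qed.

Lemma FR_mpoly (s : seq {mpoly K[n]}) :
  \sum_(a <- s) a ^+ 2 = 0 -> forall a, a \in s -> a = 0.
Proof.
suff : PL (\sum_(a <- s) a ^+ 2) /\ (\sum_(a <- s) a ^+ 2 = 0 -> forall a, a \in s -> a = 0).
  by case.
elim: s => [|b s [IH1 IH2]]; first by rewrite big_nil /PL mlead0 mcoeff0.
rewrite big_cons; have [h1 h2] := PL_add (PL_sq b) IH1.
split => // /h2 [/eqP hb /IH2 hs] a; rewrite inE => /orP[/eqP ->|/hs //].
by move: hb; rewrite expf_eq0 /= => /eqP.
Qed.
End FRmpoly.

Section Weights.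
Variable (n : nat) (K : realDomainType).
Implicit Types G : {mpoly K[n]}.

Definition wt (w : 'I_n -> nat) (m : 'X_{1..n}) : nat := (\sum_(i < n) w i * m i)%nat.

Definition Phi (w : 'I_n -> nat) : {mpoly K[n]} -> {poly {mpoly K[n]}} :=
  mmap ((@polyC _) \o (@mpolyC n K)) (fun i => 'X^(w i) * ('X_i)%:P).

Lemma Phi_E w G : Phi w G =
  \sum_(mu <- msupp G) ((G@_mu *: 'X_[mu])%:P * 'X^(wt w mu)).
Proof.
rewrite /Phi /mmap; apply: eq_bigr => mu _; rewrite /mmap1 /=.
under eq_bigr do rewrite exprMn -exprM.
rewrite big_split /= prodrXr.
have -> : \prod_(i < n) ('X_i : {mpoly K[n]})%:P ^+ mu i = ('X_[mu])%:P.
  by rewrite mpolyXE_id rmorph_prod; apply: eq_bigr => i _; rewrite rmorphXn.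
by rewrite -mul_mpolyC polyCM /wt -mulrA [_ * (_%:P)]mulrC.
Qed.

Lemma Phi_factor w G (m : nat) : (forall mu, mu \in msupp G -> (m <= wt w mu)%nat) ->
  exists Q, Phi w G = 'X^m * Q.
Proof.
move=> h; exists (\sum_(mu <- msupp G) ((G@_mu *: 'X_[mu])%:P * 'X^(wt w mu - m))).
rewrite Phi_E mulr_sumr big_seq [RHS]big_seq; apply: eq_bigr => mu hmu.
by rewrite mulrCA -exprD subnKC ?h.
Qed.

Lemma Phi_zero w G (m : nat) Q : Phi w G = 'X^m * Q ->
  forall mu, (wt w mu < m)%nat -> G@_mu = 0.
Proof.
move=> e mu lt.
have := congr1 (fun P : {poly {mpoly K[n]}} => P`_(wt w mu)) e.
rewrite /= coefXnM lt Phi_E coef_sum.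
under eq_bigr do rewrite coefMXn coefC.
move/(congr1 (mcoeff mu)); rewrite mcoeff0 raddf_sum /=.
have [hmu|hmu] := boolP (mu \in msupp G); last by rewrite memN_msupp_eq0.
rewrite (bigD1_seq mu) ?msupp_uniq //= ltnn subnn eqxx mcoeffZ mcoeffX eqxx mulr1.
rewrite big1 ?addr0 // => mu' ne.
case: ifP => _; first by rewrite mcoeff0.
case: eqP => _; last by rewrite mcoeff0.
by rewrite mcoeffZ mcoeffX (negbTE ne) mulr0.
Qed.

Lemma Wgt (gs : seq {mpoly K[n]}) w (m : nat) :
  (forall mu, mu \in msupp (\sum_(g <- gs) g ^+ 2) -> (2 * m <= wt w mu)%nat) ->
  forall g, g \in gs -> forall mu, (wt w mu < m)%nat -> g@_mu = 0.
Proof.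
move=> h g hg.
have [Q eQ] := Phi_factor h.
have e : \sum_(F <- map (Phi w) gs) F ^+ 2 = 'X^(2 * m) * Q.
  by rewrite -eQ big_map /Phi rmorph_sum; apply: eq_bigr => F _; rewrite rmorphXn.
have [F' eF'] := L2 (@FR_mpoly n K) e (map_f _ hg).
exact: Phi_zero eF'.
Qed.
End Weights.

Definition mn3 (s : seq nat) : 'X_{1..3} := [multinom (nth 0%nat s i) | i < 3].
Definition mA := mn3 [:: 6; 4; 2]%nat.
Definition mB := mn3 [:: 4; 6; 2]%nat.
Definition mC := mn3 [:: 2; 2; 8]%nat.
Definition mD := mn3 [:: 4; 4; 4]%nat.
Definition w3 (s : seq nat) : 'I_3 -> nat := fun i => nth 0%nat s i.

Lemma wt3 s mu : wt (w3 s) mu =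
  (nth 0 s 0 * mu ord0 + nth 0 s 1 * mu (inord 1) + nth 0 s 2 * mu (inord 2))%nat.
Proof.
rewrite /wt !big_ord_recr big_ord0 /= add0n /w3.
congr (_ + _ + _)%nat; congr (_ * _)%nat; first [done | (congr (mu _); apply/val_inj; by rewrite /= ?inordK)].
Qed.

Lemma mn3E s i : mn3 s i = nth 0%nat s i.
Proof. by rewrite /mn3 mnmE. Qed.

Lemma mn3_neq s t : (s != t) -> size s = 3%nat -> size t = 3%nat -> mn3 s != mn3 t.
Proof.
move=> ne ss st; apply: contra ne => /eqP /mnmP e; apply/eqP.
apply: (@eq_from_nth _ 0%nat); first by rewrite ss st.
move=> i; rewrite ss => hi; have := e (Ordinal hi); by rewrite !mn3E.
Qed.

Lemma wt3E s t : wt (w3 s) (mn3 t) =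
  (nth 0 s 0 * nth 0 t 0 + nth 0 s 1 * nth 0 t 1 + nth 0 s 2 * nth 0 t 2)%nat.
Proof. by rewrite wt3 !mn3E !inordK. Qed.

Lemma arith3 (a0 a1 a2 b0 b1 b2 : nat) :
  (a0 + b0 = 4 -> a1 + b1 = 4 -> a2 + b2 = 4 ->
  6 <= a0 + a1 + a2 -> 1 <= a2 -> 7 <= 3 * a0 + a2 -> 7 <= 3 * a1 + a2 ->
  6 <= b0 + b1 + b2 -> 1 <= b2 -> 7 <= 3 * b0 + b2 -> 7 <= 3 * b1 + b2 ->
  a0 = b0 /\ a1 = b1 /\ a2 = b2)%nat.
Proof. lia. Qed.

Section NonSOS.
Variable K : realDomainType.

Definition Nf : {mpoly K[3]} := 'X_[mA] + 'X_[mB] + 'X_[mC] - 'X_[mD] *+ 3.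

Lemma Nf_coef mu : Nf@_mu =
  (mA == mu)%:R + (mB == mu)%:R + (mC == mu)%:R - (mD == mu)%:R *+ 3.
Proof. by rewrite /Nf mcoeffB mcoeffMn !mcoeffD !mcoeffX. Qed.

Lemma Nf_supp mu : mu \in msupp Nf -> [\/ mu = mA, mu = mB, mu = mC | mu = mD].
Proof.
rewrite mcoeff_msupp Nf_coef.
case: (eqVneq mA mu) => [->|_]; first by constructor.
case: (eqVneq mB mu) => [->|_]; first by constructor.
case: (eqVneq mC mu) => [->|_]; first by constructor.
case: (eqVneq mD mu) => [->|_]; first by constructor.
by rewrite !addr0 mul0rn subr0 eqxx.
Qed.

Lemma Nf_mD : Nf@_mD = - 3%:R.
Proof.
rewrite Nf_coef eqxx !(negbTE (mn3_neq _ _ _)) // /=.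
have -> : (false%:R : K) = 0 by []. have -> : (true%:R : K) = 1 by []. by rewrite !add0r.
Qed.

Lemma wgt_Nf s (m : nat) : size s = 3%nat ->
  (2 * m <= wt (w3 s) mA)%nat -> (2 * m <= wt (w3 s) mB)%nat ->
  (2 * m <= wt (w3 s) mC)%nat -> (2 * m <= wt (w3 s) mD)%nat ->
  forall mu, mu \in msupp Nf -> (2 * m <= wt (w3 s) mu)%nat.
Proof. by move=> _ hA hB hC hD mu /Nf_supp [] ->. Qed.

Definition P3 (mu : 'X_{1..3}) : bool :=
  [&& (6 <= wt (w3 [:: 1;1;1]%nat) mu)%nat, (1 <= wt (w3 [:: 0;0;1]%nat) mu)%nat,
      (7 <= wt (w3 [:: 3;0;1]%nat) mu)%nat & (7 <= wt (w3 [:: 0;3;1]%nat) mu)%nat].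

Lemma P3_pair (k1 k2 : 'X_{1..3}) : mD = (k1 + k2)%MM -> P3 k1 -> P3 k2 -> k1 = k2.
Proof.
move=> /mnmP hk.
have i1 : (inord 1 : 'I_3) = Ordinal (isT : (1 < 3)%nat) by apply/val_inj; rewrite /= inordK.
have i2 : (inord 2 : 'I_3) = Ordinal (isT : (2 < 3)%nat) by apply/val_inj; rewrite /= inordK.
have e0 := hk ord0; have e1 := hk (inord 1); have e2 := hk (inord 2).
rewrite !mnmDE !mn3E ?inordK /= in e0 e1 e2.
rewrite /P3 !wt3 /= => /and4P [h1 h2 h3 h4] /and4P [g1 g2 g3 g4].
have f0 : k1 ord0 = k2 ord0 by lia.
have f1 : k1 (inord 1) = k2 (inord 1) by lia.
have f2 : k1 (inord 2) = k2 (inord 2) by lia.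
apply/mnmP => -[[|[|[|i]]] hi] //.
- by have -> : Ordinal hi = ord0 by apply/val_inj.
- by have -> : Ordinal hi = inord 1 by rewrite i1; apply/val_inj.
- by have -> : Ordinal hi = inord 2 by rewrite i2; apply/val_inj.
all: done.
Qed.

Lemma nonSOS (gs : seq {mpoly K[3]}) : Nf <> \sum_(g <- gs) g ^+ 2.
Proof.
move=> e.
have W1 := Wgt (w := w3 [:: 1;1;1]%nat) (m := 6) (gs := gs).
have W2 := Wgt (w := w3 [:: 0;0;1]%nat) (m := 1) (gs := gs).
have W3 := Wgt (w := w3 [:: 3;0;1]%nat) (m := 7) (gs := gs).
have W4 := Wgt (w := w3 [:: 0;3;1]%nat) (m := 7) (gs := gs).
rewrite -e in W1 W2 W3 W4.
have Z1 : forall g, g \in gs -> forall mu, (wt (w3 [:: 1;1;1]%nat) mu < 6)%nat -> g@_mu = 0.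
  by apply: W1; apply: wgt_Nf => //; rewrite wt3E.
have Z2 : forall g, g \in gs -> forall mu, (wt (w3 [:: 0;0;1]%nat) mu < 1)%nat -> g@_mu = 0.
  by apply: W2; apply: wgt_Nf => //; rewrite wt3E.
have Z3 : forall g, g \in gs -> forall mu, (wt (w3 [:: 3;0;1]%nat) mu < 7)%nat -> g@_mu = 0.
  by apply: W3; apply: wgt_Nf => //; rewrite wt3E.
have Z4 : forall g, g \in gs -> forall mu, (wt (w3 [:: 0;3;1]%nat) mu < 7)%nat -> g@_mu = 0.
  by apply: W4; apply: wgt_Nf => //; rewrite wt3E.
have Z : forall g, g \in gs -> forall mu, ~~ P3 mu -> g@_mu = 0.
  move=> g hg mu; rewrite /P3 !negb_and -!ltnNge => /or4P [h|h|h|h].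
  - exact: Z1 h.
  - exact: Z2 h.
  - exact: Z3 h.
  - exact: Z4 h.
have := congr1 (mcoeff mD) e; rewrite Nf_mD raddf_sum /= => h.
have : 0 <= \sum_(g <- gs) (g ^+ 2)@_mD.
  rewrite big_seq; apply: sumr_ge0 => g hg.
  rewrite expr2 mcoeffM; apply: sumr_ge0 => -[k1 k2] /= /eqP hk.
  have [p1|p1] := boolP (P3 k1); last by rewrite (Z g hg _ p1) mul0r.
  have [p2|p2] := boolP (P3 k2); last by rewrite (Z g hg _ p2) mulr0.
  by rewrite (P3_pair hk p1 p2) -expr2 sqr_ge0.
by rewrite -h oppr_ge0 leNgt ltr0n.
Qed.

End NonSOS.

Section Even.
Variable n : nat.
Implicit Types F G : {mpoly R[n]}.
Definition Ev F := forall m, m \in msupp F -> forall i, ~~ odd (m i).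

Lemma Ev_add F G : Ev F -> Ev G -> Ev (F + G).
Proof. by move=> hF hG m /msuppD_le; rewrite mem_cat => /orP[/hF|/hG]. Qed.

Lemma Ev_sub F G : Ev F -> Ev G -> Ev (F - G).
Proof. by move=> hF hG m /msuppB_le; rewrite mem_cat => /orP[/hF|/hG]. Qed.

Lemma Ev_mul F G : Ev F -> Ev G -> Ev (F * G).
Proof.
move=> hF hG m /msuppM_le /allpairsP [[m1 m2] /= [h1 h2 ->]] i.
by rewrite mnmDE oddD (negbTE (hF _ h1 i)) (negbTE (hG _ h2 i)).
Qed.

Lemma Ev_Mn F j : Ev F -> Ev (F *+ j).
Proof.
move=> hF m; rewrite mcoeff_msupp mcoeffMn => h; apply: hF.
by rewrite mcoeff_msupp; apply: contra h => /eqP ->; rewrite mul0rn.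
Qed.

Lemma Ev_Xn (i : 'I_n) j : ~~ odd j -> Ev ('X_i ^+ j).
Proof.
move=> hj m; rewrite mpolyXn msuppX inE => /eqP -> i'.
by rewrite mulmnE mnm1E oddM (negbTE hj) andbF.
Qed.

Lemma Ev1 : Ev 1.
Proof. by move=> m; rewrite msupp1 inE => /eqP -> i; rewrite mnm0E. Qed.
End Even.

Lemma motz0 (F : realFieldType) (a b c : F) : 0 <= a -> 0 <= b -> 0 <= c ->
  0 <= a^+4 * b^+2 + a^+2 * b^+4 + c^+3 - (a^+2 * b^+2 * c) *+ 3.
Proof.
move=> ha hb hc.
have -> : a^+4 * b^+2 + a^+2 * b^+4 + c^+3 - (a^+2 * b^+2 * c) *+ 3 =
  (a * b * (a - b))^+2 + (c - a * b)^+2 * (c + (a * b) *+ 2) by ring.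
apply: addr_ge0; first exact: sqr_ge0.
apply: mulr_ge0; first exact: sqr_ge0.
by apply: addr_ge0 => //; apply: mulrn_wge0; exact: mulr_ge0.
Qed.

Lemma motz (F : realFieldType) (y z w : F) :
  0 <= y^+4 * z^+2 + y^+2 * z^+4 + w^+6 - (y^+2 * z^+2 * w^+2) *+ 3.
Proof.
have := motz0 (normr_ge0 y) (normr_ge0 z) (sqr_ge0 w).
have sqr_normr : forall x : F, `|x| ^+ 2 = x ^+ 2 by move=> x; exact: real_normK (num_real x).
have e4 : forall x : F, `|x| ^+ 4 = x ^+ 4.
  by move=> x; rewrite (_ : 4 = 2 * 2)%nat // !exprM sqr_normr.
by rewrite !e4 !sqr_normr -exprM.
Qed.

Section Main.
Variable n : nat.
Local Notation k := n.+4.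
Definition Mk : {mpoly R[k]} :=
  'X_(inord 1)^+4 * 'X_(inord 2)^+2 + 'X_(inord 1)^+2 * 'X_(inord 2)^+4
  + 'X_(inord 3)^+6 - ('X_(inord 1)^+2 * 'X_(inord 2)^+2 * 'X_(inord 3)^+2) *+ 3.
Definition pp : {mpoly R[k]} := sq_monomial k * Mk.

Lemma Ev_sq : Ev (sq_monomial k).
Proof. rewrite /sq_monomial; apply: big_ind => //; [exact: Ev1 | exact: Ev_mul | move=> i _; exact: Ev_Xn]. Qed.

Lemma Ev_pp : even_mpoly pp.
Proof.
apply: Ev_mul; first exact: Ev_sq.
rewrite /Mk; repeat (apply: Ev_Xn || apply: Ev_sub || apply: Ev_add || apply: Ev_mul || apply: Ev_Mn).
all: done.
Qed.

Lemma homX (i : 'I_k) : ('X_i : {mpoly R[k]}) \is 1.-homog.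
Proof. by rewrite dhomogX; apply/eqP; exact: mdeg1. Qed.

Lemma hom_Mk : Mk \is 6.-homog.
Proof.
rewrite /Mk; apply: rpredB; last apply: rpredMn.
  apply: rpredD; first apply: rpredD.
  - exact: (dhomogM (dhomogMn 4 (homX _)) (dhomogMn 2 (homX _))).
  - exact: (dhomogM (dhomogMn 2 (homX _)) (dhomogMn 4 (homX _))).
  - exact: (dhomogMn 6 (homX _)).
exact: (dhomogM (dhomogM (dhomogMn 2 (homX _)) (dhomogMn 2 (homX _))) (dhomogMn 2 (homX _))).
Qed.

Lemma hom_pp : homogeneous pp.
Proof.
have : sq_monomial k \is homog mdeg.
  rewrite /sq_monomial -(big_map (fun i : 'I_k => 'X_i ^+ 2) xpredT idfun).
  apply: homog_prod; apply/allP => x /mapP [i _ ->].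
  exact: (homogE (dhomogMn 2 (homX i))).
move/homogP => [d hd]; exists (d + 6)%nat; exact: dhomogM hd hom_Mk.
Qed.

Lemma psd_pp (x : 'I_k -> R) : 0 <= pp.@[x].
Proof.
rewrite /pp /Mk /sq_monomial rmorphM rmorph_prod /=; apply: mulr_ge0.
  by apply: prodr_ge0 => i _; rewrite rmorphXn /= mevalXU sqr_ge0.
rewrite !(rmorphB, rmorphD, rmorphM, rmorphMn, rmorphXn) /= !mevalXU.
exact: motz.
Qed.
End Main.

Section Bad.
Variable n : nat.
Local Notation k := n.+4.
Definition Y3 : {mpoly R[3]} := 'X_ord0.
Definition Z3 : {mpoly R[3]} := 'X_(lift ord0 ord0).
Definition W3 : {mpoly R[3]} := 'X_(lift ord0 (lift ord0 ord0)).

Definition hA (i : 'I_k) : {poly {mpoly R[3]}} :=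
  nth 'X [:: 1; 'X * Y3%:P; 'X * Z3%:P; 'X * W3%:P] i.

Local Notation PhiA := (mmap ((@polyC _) \o (@mpolyC 3 R)) hA).

Lemma PhiA_X i : PhiA 'X_i = hA i.
Proof. by rewrite mmapX mmap1U. Qed.

Lemma PhiA_sq : PhiA (sq_monomial k) = 'X^(2 * n + 6) * (Y3^+2 * Z3^+2 * W3^+2)%:P.
Proof.
rewrite /sq_monomial rmorph_prod /=.
under eq_bigr do rewrite rmorphXn /= PhiA_X.
rewrite !big_ord_recl /= /hA /=.
under eq_bigr do rewrite nth_nil.
rewrite prodr_const card_ord.
rewrite !rmorphM /= exprD exprM; ring.
Qed.

Definition M3 : {mpoly R[3]} :=
  Y3^+4 * Z3^+2 + Y3^+2 * Z3^+4 + W3^+6 - (Y3^+2 * Z3^+2 * W3^+2) *+ 3.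

Lemma PhiA_Mk : PhiA (Mk n) = 'X^6 * M3%:P.
Proof.
rewrite /Mk !(rmorphB, rmorphD, rmorphM, rmorphMn, rmorphXn) /= !PhiA_X.
rewrite /hA !inordK //= /M3.
ring.
Qed.

Lemma Xmn3 a b c : ('X_[mn3 [:: a; b; c]] : {mpoly R[3]}) = Y3^+a * Z3^+b * W3^+c.
Proof.
rewrite mpolyXE_id !big_ord_recl big_ord0 !mn3E mulr1 /Y3 /Z3 /W3 /=.
by rewrite mulrA.
Qed.

Lemma Nf_eq : (Nf R) = Y3^+2 * Z3^+2 * W3^+2 * M3.
Proof. rewrite /Nf /mA /mB /mC /mD !Xmn3 /M3; ring. Qed.

Lemma PhiA0 q : (PhiA q).[0] = (q.@[e1 k])%:MP.
Proof.
rewrite /mmap horner_sum mevalE rmorph_sum; apply: eq_bigr => m _ /=.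
rewrite hornerM hornerC rmorphM /= /mmap1 horner_prod rmorph_prod; congr (_ * _).
apply: eq_bigr => i _; rewrite horner_exp rmorphXn; congr (_ ^+ _).
rewrite /hA /e1; case: i => [[|[|[|[|j]]]] hi] /=.
- by rewrite hornerC rmorph1.
- by rewrite hornerM hornerX mul0r rmorph0.
- by rewrite hornerM hornerX mul0r rmorph0.
- by rewrite hornerM hornerX mul0r rmorph0.
- by rewrite nth_nil hornerX rmorph0.
Qed.

Lemma bad_pp : bad_point (pp n) (e1 k).
Proof.
move=> q [_ [qs e]]; apply/eqP/negPn/negP => hc.
have eP : \sum_(F <- map (fun h => PhiA h) qs) F ^+ 2 =
    'X^(2 * n + 12) * (PhiA q ^+ 2 * (Nf R)%:P).
  rewrite big_map.
  under eq_bigr do rewrite -rmorphXn.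
  rewrite -rmorph_sum -e /pp !rmorphM /= PhiA_sq PhiA_Mk Nf_eq.
  rewrite !rmorphM /= (_ : (2 * n + 12 = 2 * n + 6 + 6)%nat); last by rewrite -addnA.
  rewrite !exprD; ring.
have [gs egs] := L1 (@FR_mpoly 3 R) eP.
rewrite hornerM horner_exp PhiA0 hornerC in egs.
apply: (@nonSOS R (map (fun g => (q.@[e1 k])^-1%:MP * g) gs)).
rewrite big_map.
under eq_bigr do rewrite exprMn.
by rewrite -mulr_sumr -egs mulrA -exprMn -rmorphM /= mulVf // rmorph1 expr1n mul1r.
Qed.
End Bad.

Local Close Scope ring_scope.

Theorem lemma3p3 (k : nat) (hk : (4 <= k)%N) :
  exists p : {mpoly R[k]},
    [/\ even_mpoly p, in_Delta p, mdivides (sq_monomial k) p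
      & bad_point p (e1 k)].
Proof.
case: k hk => [|[|[|[|n]]]] // _.
exists (pp n); split.
- exact: Ev_pp.
- split; first by split; [exact: hom_pp | exact: psd_pp].
  move=> hS; have := @bad_pp n (GRing.one _).
  rewrite GRing.expr1n GRing.mul1r => /(_ hS) /eqP; rewrite GRing.rmorph1 GRing.oner_eq0 //.
- by exists (Mk n).
- exact: bad_pp.
Qed.
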